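(* Let $0<\epsilon\le \mathrm{e}^{-2}$, set $a=2\sqrt{\log(1/\epsilon)}$, and define \[ \phi(p)=\frac{\operatorname{erf}(ap)+1}{2},\qquad \psi(p)=\phi(p)\,\mathrm{e}^{-p},\qquad p\in\mathbb{R}. \] Then: (i) $0<\psi(p)\le \mathrm{e}^{-|p|}$ for all $p\in\mathbb{R}$ (exponential decay on $\mathbb{R}$); (ii) $|\psi(p)-\mathrm{e}^{-p}|\le\epsilon$ for all $p\ge 1/2$; (iii) there is a constant $C>0$, independent of $\epsilon$ and $r$, such that for every integer $r$ with $\tfrac12\log(1/\epsilon)\le r\le\log(1/\epsilon)$, \[ \|\psi^{(r)}\|_{L^2(\mathbb{R})}^{1/r}\le C\, r . \]
   Context: $\operatorname{erf}(p)=\frac{2}{\sqrt{\pi}}\int_0^p \mathrm{e}^{-t^2}\,\mathrm{d}t$ is the error function; $\log$ is the natural logarithm; $\psi^{(r)}$ is the $r$-th derivative of $\psi$. *)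

(* Defs.v *)
From Stdlib Require Import Reals.
From Coquelicot Require Import Coquelicot.
Open Scope R_scope.

Definition erf (p : R) : R :=
  2 / sqrt PI * RInt (fun t => exp (- t ^ 2)) 0 p.

Definition a_eps (eps : R) : R := 2 * sqrt (ln (/ eps)).

Definition phi (eps p : R) : R := (erf (a_eps eps * p) + 1) / 2.

Definition psi (eps p : R) : R := phi eps p * exp (- p).

Definition L2_norm_is (f : R -> R) (n : R) : Prop :=
  exists I : R,
    is_RInt_gen (fun p => (f p) ^ 2) (Rbar_locally m_infty) (Rbar_locally p_infty) I
    /\ n = sqrt I.

(* Main.v *)
Require Import Defs.
From Stdlib Require Import Reals Lra Psatz FunctionalExtensionality Classical.
From Coquelicot Require Import Coquelicot.
Open Scope R_scope.


Lemma exd_cont : forall (f : R -> R) x, ex_derive f x -> continuous f x.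
Proof. intros f x H. apply (ex_derive_continuous (K:=R_AbsRing) (V:=R_NormedModule)). exact H. Qed.

Lemma exRInt_cont : forall (f : R -> R) a b, (forall z, Rmin a b <= z <= Rmax a b -> continuous f z) -> ex_RInt f a b.
Proof. intros. apply (ex_RInt_continuous (V:=R_CompleteNormedModule)). exact H. Qed.

Lemma scalR : forall a b : R, scal a b = a * b.
Proof. reflexivity. Qed.

Ltac toR := match goal with |- ?a = ?b => change (@eq R a b) end.

Definition gs (t : R) := exp (- t ^ 2).
Definition Ig (x : R) := RInt gs 0 x.
Definition fJ (x t : R) := exp (- (x ^ 2 * (1 + t ^ 2))) / (1 + t ^ 2).
Definition Jg (x : R) := RInt (fJ x) 0 1.

Lemma gs_cont : forall x, continuous gs x.
Proof. intro x. apply exd_cont. unfold gs. auto_derive. auto. Qed.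

Lemma gs_exRInt : forall a b, ex_RInt gs a b.
Proof. intros. apply exRInt_cont. intros; apply gs_cont. Qed.

Lemma Ig_deriv : forall x, is_derive Ig x (gs x).
Proof.
  intro x. apply is_derive_RInt with 0.
  - apply filter_forall. intro b. apply RInt_correct, gs_exRInt.
  - apply gs_cont.
Qed.

Lemma fJ_cont : forall x t, continuous (fJ x) t.
Proof. intros. apply exd_cont. unfold fJ. auto_derive.
  assert (0 <= t^2) by (apply pow2_ge_0). lra. Qed.

Lemma fJ_exRInt : forall x a b, ex_RInt (fJ x) a b.
Proof. intros. apply exRInt_cont. intros; apply fJ_cont. Qed.

Lemma fJ_derive : forall u v, Derive (fun z => fJ z v) u = -2 * u * exp (- (u ^ 2 * (1 + v ^ 2))).
Proof.
  intros. apply is_derive_unique. unfold fJ. auto_derive.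
  - assert (0 <= v^2) by (apply pow2_ge_0). lra.
  - assert (0 <= v^2) by (apply pow2_ge_0). replace (u*(u*1)*(1+v*(v*1))) with (u^2*(1+v^2)) by ring. field. lra.
Qed.

Lemma Jg_val : forall x, RInt (fun t => Derive (fun u => fJ u t) x) 0 1 = -2 * gs x * Ig x.
Proof.
    intro x.
    rewrite (RInt_ext _ (fun t => scal (-2 * gs x) (scal x (gs (x * t + 0))))).
    2:{ intros t _. rewrite fJ_derive. rewrite (scalR x), (scalR (-2 * gs x)).
        unfold gs. replace (- (x*t+0)^2) with (-(x^2*(1+t^2)) + x^2) by ring.
        rewrite exp_plus. replace (-2 * exp (- x ^ 2) * (x * (exp (- (x ^ 2 * (1 + t ^ 2))) * exp (x ^ 2))))
         with (-2 * x * exp (- (x ^ 2 * (1 + t ^ 2))) * (exp (- x ^ 2) * exp (x^2))) by ring.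
        rewrite <- exp_plus. replace (- x^2 + x^2) with 0 by ring. rewrite exp_0. rewrite Rmult_1_r. reflexivity. }
    rewrite (RInt_scal (V:=R_CompleteNormedModule)).
    2:{ apply exRInt_cont. intros. apply exd_cont. unfold gs. apply (ex_derive_ext (fun t => x * exp (- (x * t + 0) ^ 2))). intros; reflexivity. auto_derive. auto. }
    rewrite (RInt_comp_lin (V:=R_CompleteNormedModule)). 2: apply gs_exRInt.
    unfold Ig. rewrite !scalR.
    replace (x*0+0) with 0 by ring. replace (x*1+0) with x by ring. reflexivity.
Qed.

Lemma Jg_deriv : forall x, is_derive Jg x (-2 * gs x * Ig x).
Proof.
  intro x. unfold Jg. rewrite <- Jg_val.
  apply (is_derive_RInt_param (fun u t => fJ u t) 0 1 x).
  - apply filter_forall. intros. unfold fJ. auto_derive.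
    assert (0 <= t^2) by (apply pow2_ge_0). lra.
  - intros t _. apply continuity_2d_pt_ext with (fun u v => -2 * u * exp (- (u ^ 2 * (1 + v ^ 2)))).
    { intros; symmetry; apply fJ_derive. }
    apply continuity_2d_pt_mult.
    + apply continuity_2d_pt_mult. apply continuity_2d_pt_const. apply continuity_2d_pt_id1.
    + apply continuity_1d_2d_pt_comp with (f := exp) (g := fun u v => - (u ^ 2 * (1 + v ^ 2))).
      * apply derivable_continuous_pt. apply derivable_pt_exp.
      * apply continuity_2d_pt_opp. apply continuity_2d_pt_mult.
        apply continuity_2d_pt_mult. apply continuity_2d_pt_id1.
        apply continuity_2d_pt_mult. apply continuity_2d_pt_id1. apply continuity_2d_pt_const.
        apply continuity_2d_pt_plus. apply continuity_2d_pt_const.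
        apply continuity_2d_pt_mult. apply continuity_2d_pt_id2.
        apply continuity_2d_pt_mult. apply continuity_2d_pt_id2. apply continuity_2d_pt_const.
  - apply filter_forall. intros. apply fJ_exRInt.
Qed.

Lemma RInt_atan : forall x, RInt (fun t => / (1 + t ^ 2)) 0 x = atan x.
Proof.
  intro x. apply is_RInt_unique.
  replace (atan x) with (minus (atan x) (atan 0)).
  2:{ rewrite atan_0. unfold minus, plus, opp; simpl. ring. }
  apply (is_RInt_derive (V:=R_CompleteNormedModule)).
  - intros. apply is_derive_Reals. apply derivable_pt_lim_atan.
  - intros. apply exd_cont. auto_derive. assert (0 <= x0^2) by apply pow2_ge_0. lra.
Qed.

Definition hg (x : R) := Ig x ^ 2 + Jg x.

Lemma hg_deriv : forall x, is_derive hg x 0.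
Proof.
  intro x. unfold hg.
  evar (l : R). replace 0 with l.
  apply (is_derive_plus (K:=R_AbsRing) (V:=R_NormedModule)).
  apply (is_derive_pow (fun x => Ig x) 2 x (gs x)). apply Ig_deriv. apply Jg_deriv.
  unfold l, plus; simpl. ring.
Qed.

Lemma hg_const : forall x, hg x = PI / 4.
Proof.
  assert (h0 : hg 0 = PI / 4).
  { unfold hg, Ig, Jg. rewrite RInt_point. rewrite <- atan_1, <- RInt_atan.
    unfold zero; simpl. rewrite Rmult_0_l, Rplus_0_l.
    apply RInt_ext. intros. unfold fJ. replace (- (0 ^ 2 * (1 + x ^ 2))) with 0 by ring.
    rewrite exp_0. toR. field. assert (0 <= x^2) by apply pow2_ge_0. lra. }
  intro x. destruct (Rtotal_order x 0) as [Hx|[Hx|Hx]].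
  - rewrite <- h0. apply eq_is_derive; auto. intros; apply hg_deriv.
  - subst; auto.
  - rewrite <- h0. symmetry. apply eq_is_derive; auto. intros; apply hg_deriv.
Qed.

Lemma exple : forall x y, x <= y -> exp x <= exp y.
Proof. intros x y H. destruct H. left; apply exp_increasing; auto. subst; lra. Qed.

Lemma Jg_pos : forall x, 0 < Jg x.
Proof.
  intro x. unfold Jg.
  apply Rlt_le_trans with (RInt (fun _ => exp (- (x ^ 2 * 2)) / 2) 0 1).
  { rewrite RInt_const. rewrite scalR. assert (0 < exp (- (x ^ 2 * 2))) by apply exp_pos. lra. }
  apply RInt_le. lra. apply exRInt_cont; intros; apply exd_cont; auto_derive; auto.
  apply fJ_exRInt.
  intros t Ht. unfold fJ. assert (0 <= t^2 <= 1) by (split; [apply pow2_ge_0|nra]).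
  assert (exp (- (x ^ 2 * 2)) <= exp (- (x ^ 2 * (1 + t ^ 2)))).
  { apply exple. assert (0 <= x^2) by apply pow2_ge_0. nra. }
  assert (0 < exp (- (x ^ 2 * 2))) by apply exp_pos.
  unfold Rdiv. apply Rmult_le_compat; try lra. apply Rinv_le_contravar; lra.
Qed.

Lemma Jg_le : forall x, Jg x <= PI / 4 * exp (- x ^ 2).
Proof.
  intro x. unfold Jg. rewrite <- atan_1, <- RInt_atan.
  rewrite Rmult_comm.
  replace (exp (- x ^ 2) * RInt (fun t => /(1+t^2)) 0 1) with (RInt (fun t => scal (exp (-x^2)) (/(1+t^2))) 0 1).
  2:{ rewrite (RInt_scal (V:=R_CompleteNormedModule)). reflexivity.
   apply exRInt_cont; intros; apply exd_cont; auto_derive. assert (0 <= z^2) by apply pow2_ge_0. lra. }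
  apply RInt_le. lra. apply fJ_exRInt.
  apply exRInt_cont; intros; apply exd_cont. apply (ex_derive_ext (fun t => exp (- x ^ 2) * / (1 + t ^ 2))).
  intros; reflexivity. auto_derive. assert (0 <= z^2) by apply pow2_ge_0. lra.
  intros t Ht. unfold fJ. change (exp (- (x ^ 2 * (1 + t ^ 2))) / (1 + t ^ 2) <= exp (- x ^ 2) * / (1 + t ^ 2)). assert (0 <= t^2) by apply pow2_ge_0.
  assert (exp (- (x ^ 2 * (1 + t ^ 2))) <= exp (- x ^ 2)).
  { apply exple. assert (0 <= x^2) by apply pow2_ge_0. nra. }
  unfold Rdiv. apply Rmult_le_compat_r; auto. left; apply Rinv_0_lt_compat; lra.
Qed.

Lemma Ig_sq : forall x, Ig x ^ 2 = PI / 4 - Jg x.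
Proof. intro x. generalize (hg_const x). unfold hg. lra. Qed.

Lemma Ig_nonneg : forall x, 0 <= x -> 0 <= Ig x.
Proof. intros. unfold Ig. apply RInt_ge_0; auto. apply gs_exRInt. intros; left; apply exp_pos. Qed.

Lemma Ig_nonpos : forall x, x <= 0 -> Ig x <= 0.
Proof. intros. unfold Ig. rewrite <- opp_RInt_swap. 2: apply gs_exRInt.
  assert (0 <= RInt gs x 0). apply RInt_ge_0; auto. apply gs_exRInt. intros; left; apply exp_pos.
  unfold opp; simpl. lra. Qed.

Lemma erf_Ig : forall x, erf x = 2 / sqrt PI * Ig x.
Proof. reflexivity. Qed.

Lemma sqrtPI_facts : 0 < sqrt PI /\ sqrt PI * sqrt PI = PI.
Proof. split. apply sqrt_lt_R0, PI_RGT_0. apply sqrt_sqrt. left; apply PI_RGT_0. Qed.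

Lemma erf_bound : forall x, -1 < erf x < 1.
Proof.
  intro x. rewrite erf_Ig. destruct sqrtPI_facts as [H1 H2].
  assert (Ig x ^ 2 < PI / 4) by (rewrite Ig_sq; generalize (Jg_pos x); lra).
  set (s := sqrt PI) in *. set (I := Ig x) in *.
  assert (-(s/2) < I < s/2) by (split; nra).
  assert (E: 2 / s * I * s = 2 * I) by (field; lra).
  set (X := 2 / s * I) in *. split; nra.
Qed.

Lemma erf_pos_tail : forall x, 0 <= x -> 1 - erf x <= exp (- x ^ 2).
Proof.
  intros x Hx. rewrite erf_Ig. destruct sqrtPI_facts as [H1 H2].
  assert (Ig x ^ 2 >= PI / 4 * (1 - exp (- x ^ 2))) by (rewrite Ig_sq; generalize (Jg_le x); lra).
  assert (0 <= Ig x) by (apply Ig_nonneg; auto).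
  assert (0 < exp (- x ^ 2) <= 1).
  { split. apply exp_pos. rewrite <- exp_0. apply exple. assert (0 <= x^2) by apply pow2_ge_0. lra. }
  set (w := exp (- x ^ 2)) in *.
  set (s := sqrt PI) in *. set (I := Ig x) in *.
  assert (I >= s / 2 * (1 - w)) by nra.
  assert (E: 2 / s * I * s = 2 * I) by (field; lra).
  set (X := 2 / s * I) in *. nra.
Qed.

Lemma erf_neg_tail : forall x, x <= 0 -> 1 + erf x <= exp (- x ^ 2).
Proof.
  intros x Hx. rewrite erf_Ig. destruct sqrtPI_facts as [H1 H2].
  assert (Ig x ^ 2 >= PI / 4 * (1 - exp (- x ^ 2))) by (rewrite Ig_sq; generalize (Jg_le x); lra).
  assert (Ig x <= 0) by (apply Ig_nonpos; auto).
  assert (0 < exp (- x ^ 2) <= 1).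
  { split. apply exp_pos. rewrite <- exp_0. apply exple. assert (0 <= x^2) by apply pow2_ge_0. lra. }
  set (w := exp (- x ^ 2)) in *.
  set (s := sqrt PI) in *. set (I := Ig x) in *.
  assert (-I >= s / 2 * (1 - w)) by nra.
  assert (E: 2 / s * I * s = 2 * I) by (field; lra).
  set (X := 2 / s * I) in *. nra.
Qed.

Lemma eps_setup : forall eps, 0 < eps <= exp (-2) ->
  2 <= ln (/ eps) /\ exp (- ln (/ eps)) = eps /\ a_eps eps ^ 2 = 4 * ln (/ eps) /\ 0 <= a_eps eps.
Proof.
  intros eps [H1 H2].
  assert (HL : 2 <= ln (/ eps)).
  { assert (exp 2 <= / eps).
    { assert (E2 : exp (-2) = / exp 2) by (rewrite <- exp_Ropp; f_equal; ring).
      rewrite E2 in H2. replace (exp 2) with (/ / exp 2) by (apply Rinv_inv).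
      apply Rinv_le_contravar; auto. }
    rewrite <- (ln_exp 2). destruct H. left; apply ln_increasing; auto. apply exp_pos.
    rewrite H; lra. }
  split; auto. split.
  - rewrite exp_Ropp, exp_ln. apply Rinv_inv. apply Rinv_0_lt_compat; auto.
  - split. unfold a_eps. simpl. rewrite Rmult_1_r.
    replace (2 * sqrt (ln (/ eps)) * (2 * sqrt (ln (/ eps)))) with (4 * (sqrt (ln (/ eps)) * sqrt (ln (/ eps)))) by ring.
    rewrite sqrt_sqrt; lra.
    unfold a_eps. assert (0 <= sqrt (ln (/ eps))) by apply sqrt_pos. lra.
Qed.

Lemma exp_pow_n : forall n x, exp (INR n * x) = exp x ^ n.
Proof. induction n; intros. simpl. rewrite Rmult_0_l, exp_0; auto.
  rewrite S_INR. replace ((INR n + 1) * x) with (INR n * x + x) by ring. rewrite exp_plus, IHn. simpl. ring. Qed.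

Lemma exp18 : exp (1/8) < 2.
Proof.
  destruct (Rlt_or_le (exp (1/8)) 2); auto.
  assert (2 ^ 8 <= exp (1/8) ^ 8) by (apply pow_incr; lra).
  rewrite <- exp_pow_n in H0. replace (INR 8 * (1/8)) with 1 in H0 by (simpl; field).
  generalize exp_le_3. simpl in H0. lra.
Qed.

Lemma phi_bounds : forall eps p, 0 < phi eps p < 1.
Proof. intros. unfold phi. generalize (erf_bound (a_eps eps * p)). lra. Qed.

Lemma phi_neg : forall eps p, 0 <= a_eps eps -> p <= 0 -> phi eps p <= exp (- (a_eps eps * p) ^ 2) / 2.
Proof. intros. unfold phi. generalize (erf_neg_tail (a_eps eps * p)). intro H1.
  assert (a_eps eps * p <= 0) by nra. specialize (H1 H2). lra. Qed.

Lemma phi_pos : forall eps p, 0 <= a_eps eps -> 0 <= p -> 1 - phi eps p <= exp (- (a_eps eps * p) ^ 2) / 2.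
Proof. intros. unfold phi. generalize (erf_pos_tail (a_eps eps * p)). intro H1.
  assert (0 <= a_eps eps * p) by nra. specialize (H1 H2). lra. Qed.

Lemma part_i : forall eps, 0 < eps <= exp (-2) -> forall p, 0 < psi eps p <= exp (- Rabs p).
Proof.
  intros eps He p. destruct (eps_setup eps He) as (HL & HeL & Ha2 & Ha).
  unfold psi. generalize (phi_bounds eps p). intros [P1 P2].
  assert (0 < exp (-p)) by apply exp_pos.
  split. nra.
  destruct (Rle_or_lt 0 p).
  - rewrite Rabs_pos_eq; auto. nra.
  - rewrite Rabs_left; auto.
    generalize (phi_neg eps p Ha (Rlt_le _ _ H0)). intro H1.
    set (a := a_eps eps) in *.
    assert (exp (- (a * p) ^ 2) * exp (-p) <= 2 * exp (- - p)).
    { rewrite <- exp_plus. replace (- - p) with p by ring.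
      replace (- (a * p) ^ 2 + - p) with ((- (a * p) ^ 2 - 2 * p) + p) by ring.
      rewrite exp_plus. apply Rmult_le_compat_r. left; apply exp_pos.
      left. apply Rle_lt_trans with (exp (1/8)). apply exple.
      assert ((a*p)^2 >= 8 * p^2).
      { rewrite Rpow_mult_distr. assert (0 <= p^2) by apply pow2_ge_0. nra. }
      assert (0 <= (p + 1/8)^2) by apply pow2_ge_0. nra.
      apply exp18. }
    nra.
Qed.

Lemma part_ii : forall eps, 0 < eps <= exp (-2) -> forall p, 1 / 2 <= p -> Rabs (psi eps p - exp (- p)) <= eps.
Proof.
  intros eps He p Hp. destruct (eps_setup eps He) as (HL & HeL & Ha2 & Ha).
  unfold psi. generalize (phi_bounds eps p). intros [P1 P2].
  generalize (phi_pos eps p Ha ltac:(lra)). intro H1.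
  set (a := a_eps eps) in *.
  assert (0 < exp (-p) <= 1). { split. apply exp_pos. rewrite <- exp_0. apply exple. lra. }
  assert (exp (- (a * p) ^ 2) <= eps).
  { rewrite <- HeL. apply exple. rewrite Rpow_mult_distr. assert (p^2 >= 1/4) by nra.
    rewrite Ha2. nra. }
  rewrite Rabs_left1. 2: nra.
  assert (0 < exp (- (a * p) ^ 2)) by apply exp_pos. nra.
Qed.

Ltac rsimp := unfold scal, plus, mult, one, zero, opp, minus; simpl; unfold mult, plus, one, zero, opp; simpl.

Definition bconst (a : R) := a / sqrt PI.
Definition Ew (a p : R) := exp (- (a * p) ^ 2 - p).

Lemma is_derive_eq : forall (f : R -> R) x l l', is_derive f x l' -> l' = l -> is_derive f x l.
Proof. intros; subst; auto. Qed.

Lemma psi_deriv : forall eps p,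
  is_derive (psi eps) p (bconst (a_eps eps) * Ew (a_eps eps) p - psi eps p).
Proof.
  intros eps p. set (a := a_eps eps).
  assert (H : is_derive (fun q => Ig (a * q)) p (a * gs (a * p))).
  { eapply is_derive_eq. apply (is_derive_comp Ig (fun q => a * q)). apply Ig_deriv.
    eapply is_derive_eq. apply (is_derive_scal (fun q => q)). apply (is_derive_id (K:=R_AbsRing)).
    reflexivity. rsimp. toR. ring. }
  assert (H2 : is_derive (fun q => (erf (a * q) + 1) / 2) p (/ sqrt PI * (a * gs (a * p)))).
  { unfold erf.
    apply (is_derive_ext (fun q => (2 / sqrt PI) / 2 * Ig (a * q) + / 2)). intros; toR. change (RInt (fun t0 => exp (- t0 ^ 2)) 0 (a * t)) with (Ig (a * t)). field. apply Rgt_not_eq, sqrt_lt_R0, PI_RGT_0.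
    eapply is_derive_eq. apply (is_derive_plus (K:=R_AbsRing) (V:=R_NormedModule)).
    apply (is_derive_scal (fun q => Ig (a * q))). apply H. apply (is_derive_const (K:=R_AbsRing)).
    rsimp. toR. field.
    apply Rgt_not_eq, sqrt_lt_R0, PI_RGT_0. }
  unfold psi, phi. fold a.
  eapply is_derive_eq.
  apply (is_derive_mult (fun q => (erf (a * q) + 1) / 2) (fun q => exp (- q))).
  - apply H2.
  - auto_derive. auto. reflexivity.
  - intros; apply Rmult_comm.
  - simpl. unfold bconst, Ew, gs, plus, mult; simpl.
    replace (- (a * p * (a * p * 1)) - p) with (- (a * p * (a * p * 1)) + - p) by ring. rewrite exp_plus. field.
    apply Rgt_not_eq, sqrt_lt_R0, PI_RGT_0.
Qed.

Definition shift (f : nat -> R) (j : nat) : R := match j with O => 0 | S j' => f j' end.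
Definition dlt (k : R) (j : nat) : R := match j with O => k | S _ => 0 end.

Fixpoint cf (a : R) (r : nat) : nat -> R :=
  match r with
  | O => fun _ => 0
  | S r' => fun j => INR (S j) * cf a r' (S j) - 2 * a ^ 2 * shift (cf a r') j - cf a r' j
                      + dlt ((-1) ^ r' * bconst a) j
  end.

Lemma cf_S : forall a r j, cf a (S r) j = INR (S j) * cf a r (S j) - 2 * a ^ 2 * shift (cf a r) j - cf a r j
                      + dlt ((-1) ^ r * bconst a) j.
Proof. reflexivity. Qed.

Definition Qp (a : R) (r : nat) (p : R) := sum_f_R0 (fun j => cf a r j * p ^ j) r.
Definition Qd (a : R) (r : nat) (p : R) := sum_f_R0 (fun j => INR (S j) * cf a r (S j) * p ^ j) r.

Lemma cf_zero : forall a r j, (r <= j)%nat -> cf a r j = 0.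
Proof.
  intros a r. induction r; intros j Hj. reflexivity.
  simpl. destruct j. lia.
  rewrite IHr by lia. rewrite IHr by lia. simpl. rewrite IHr by lia. ring.
Qed.

Lemma sum_deriv : forall (c : nat -> R) N p,
  is_derive (fun p => sum_f_R0 (fun j => c j * p ^ j) (S N)) p
            (sum_f_R0 (fun j => INR (S j) * c (S j) * p ^ j) N).
Proof.
  intros c N p. induction N.
  - simpl. auto_derive. auto. ring.
  - eapply is_derive_eq.
    apply (is_derive_plus (K:=R_AbsRing) (V:=R_NormedModule)
       (fun p => sum_f_R0 (fun j => c j * p ^ j) (S N)) (fun p => c (S (S N)) * p ^ (S (S N)))).
    apply IHN. apply (is_derive_scal (fun p => p ^ (S (S N)))).
    apply (is_derive_pow (fun p => p) (S (S N)) p 1). apply (is_derive_id (K:=R_AbsRing)).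
    rewrite tech5. rsimp. toR. simpl pred. ring.
Qed.

Lemma Qp_deriv : forall a r p, is_derive (Qp a r) p (Qd a r p).
Proof.
  intros a r p. destruct r.
  - unfold Qp, Qd. simpl. auto_derive. auto. ring.
  - unfold Qp. eapply is_derive_eq. apply sum_deriv.
    unfold Qd. rewrite tech5. rewrite (cf_zero a (S r) (S (S r))) by lia. toR. ring.
Qed.

Lemma sum_shift : forall (c : nat -> R) N p,
  sum_f_R0 (fun j => shift c j * p ^ j) (S N) = p * sum_f_R0 (fun j => c j * p ^ j) N.
Proof.
  intros c N p. induction N. simpl. ring.
  rewrite tech5, IHN. simpl. ring.
Qed.

Lemma sum_dlt : forall k N p, sum_f_R0 (fun j => dlt k j * p ^ j) N = k.
Proof. intros. induction N. simpl. ring. rewrite tech5, IHN. simpl. ring. Qed.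

Lemma sum_scal_l : forall (A : nat -> R) x N, sum_f_R0 (fun i => x * A i) N = x * sum_f_R0 A N.
Proof. intros. rewrite scal_sum. apply sum_eq. intros; ring. Qed.

Lemma Qp_rec : forall a r p,
  Qp a (S r) p = Qd a r p - (2 * a ^ 2 * p + 1) * Qp a r p + (-1) ^ r * bconst a.
Proof.
  intros a r p. unfold Qp at 1.
  rewrite (sum_eq _ (fun j => ((INR (S j) * cf a r (S j) * p ^ j - 2 * a ^ 2 * (shift (cf a r) j * p ^ j))
     - cf a r j * p ^ j) + dlt ((-1) ^ r * bconst a) j * p ^ j)).
  2:{ intros. rewrite cf_S. ring. }
  rewrite plus_sum, minus_sum, minus_sum, sum_scal_l, sum_shift, sum_dlt.
  rewrite tech5. rewrite (cf_zero a r (S (S r))) by lia.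
  rewrite tech5. rewrite (cf_zero a r (S r)) by lia.
  unfold Qd, Qp. ring.
Qed.

Definition Fr (eps : R) (r : nat) (p : R) :=
  (-1) ^ r * psi eps p + Qp (a_eps eps) r p * Ew (a_eps eps) p.

Lemma Ew_deriv : forall a p, is_derive (Ew a) p ((- (2 * a ^ 2 * p) - 1) * Ew a p).
Proof. intros. unfold Ew. auto_derive. auto. replace (- (a * p * (a * p * 1)) + - p) with (- (a * p) ^ 2 - p) by ring. ring. Qed.

Lemma Fr_deriv : forall eps r p, is_derive (Fr eps r) p (Fr eps (S r) p).
Proof.
  intros eps r p. unfold Fr. set (a := a_eps eps).
  eapply is_derive_eq.
  apply (is_derive_plus (K:=R_AbsRing) (V:=R_NormedModule)).
  apply (is_derive_scal (psi eps)). apply psi_deriv.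
  apply (is_derive_mult (Qp a r) (Ew a)). apply Qp_deriv. apply Ew_deriv.
  intros; apply Rmult_comm.
  rewrite Qp_rec. fold a. rsimp. toR. ring.
Qed.

Lemma Derive_n_psi : forall eps r, Derive_n (psi eps) r = Fr eps r.
Proof.
  intros eps r. induction r.
  - apply functional_extensionality. intro p. unfold Fr, Qp. simpl. ring.
  - apply functional_extensionality. intro p. simpl. rewrite IHr.
    apply is_derive_unique. apply Fr_deriv.
Qed.

Fixpoint ec (b u v : R) (k : nat) : nat -> R :=
  match k with
  | O => dlt b
  | S k' => fun j => u * ec b u v k' j + v * shift (ec b u v k') j
  end.

Lemma ec_nonneg : forall b u v, 0 <= b -> 0 <= u -> 0 <= v -> forall k j, 0 <= ec b u v k j.
Proof.
  intros b u v Hb Hu Hv. induction k; intros j. destruct j; simpl; lra.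
  simpl. destruct j; simpl.
  - specialize (IHk 0%nat). nra.
  - generalize (IHk (S j)) (IHk j). nra.
Qed.

Lemma ec_0 : forall b u v, 0 <= b -> 1 <= u -> forall k, b <= ec b u v k 0.
Proof.
  intros b u v Hb Hu. induction k. simpl; lra. simpl. rewrite Rmult_0_r, Rplus_0_r. nra.
Qed.

Lemma ec_zero : forall b u v k j, (k < j)%nat -> ec b u v k j = 0.
Proof.
  induction k; intros j Hj. destruct j. lia. reflexivity.
  simpl. destruct j. lia. simpl. rewrite !IHk by lia. ring.
Qed.

Lemma ec_ratio : forall b u v, 0 <= b -> 0 <= u -> 0 <= v -> forall k j,
  INR (S j) * u * ec b u v k (S j) <= INR k * v * ec b u v k j.
Proof.
  intros b u v Hb Hu Hv. induction k; intros j.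
  - simpl. destruct j; simpl; lra.
  - change (ec b u v (S k) (S j)) with (u * ec b u v k (S j) + v * ec b u v k j).
    change (ec b u v (S k) j) with (u * ec b u v k j + v * shift (ec b u v k) j).
    assert (H1 := IHk j).
    assert (H2 : INR j * u * ec b u v k j <= INR k * v * shift (ec b u v k) j).
    { destruct j. simpl. generalize (ec_nonneg b u v Hb Hu Hv k 0). intros. rewrite Rmult_0_l, Rmult_0_l.
      apply Rmult_le_pos. apply Rmult_le_pos. apply pos_INR. auto. simpl. lra.
      simpl shift. apply IHk. }
    assert (H3 : 0 <= shift (ec b u v k) j) by (destruct j; simpl; [lra | apply ec_nonneg; auto]).
    generalize (ec_nonneg b u v Hb Hu Hv k j). intro H4.
    rewrite !S_INR in *. generalize (pos_INR k) (pos_INR j). intros.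
    nra.
Qed.

Lemma ec_sum : forall b u v x k, sum_f_R0 (fun j => ec b u v k j * x ^ j) k = b * (u + v * x) ^ k.
Proof.
  intros b u v x k. induction k.
  - simpl. ring.
  - rewrite (sum_eq _ (fun j => u * (ec b u v k j * x ^ j) + v * (shift (ec b u v k) j * x ^ j))).
    2:{ intros. simpl. ring. }
    rewrite plus_sum, !sum_scal_l, sum_shift, tech5, ec_zero by lia. rewrite IHk. simpl. ring.
Qed.

Lemma bconst_nonneg : forall a, 0 <= a -> 0 <= bconst a.
Proof. intros. unfold bconst. apply Rdiv_le_0_compat; auto. apply sqrt_lt_R0, PI_RGT_0. Qed.

Lemma cf_bound : forall a R0 u, 0 <= a -> 1 <= u -> u ^ 2 - 2 * u >= INR R0 * (2 * a ^ 2) ->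
  forall k, (k <= R0)%nat -> forall j, Rabs (cf a k j) <= ec (bconst a) u (2 * a ^ 2) k j.
Proof.
  intros a R0 u Ha Hu HR. set (b := bconst a). set (v := 2 * a ^ 2).
  assert (Hb : 0 <= b) by (apply bconst_nonneg; auto).
  assert (Hv : 0 <= v) by (unfold v; assert (0 <= a^2) by apply pow2_ge_0; lra).
  induction k; intros Hk j.
  - simpl. rewrite Rabs_R0. apply (ec_nonneg b u v Hb ltac:(lra) Hv 0%nat j).
  - rewrite cf_S. fold b.
    assert (IH := IHk ltac:(lia)).
    assert (A1 : Rabs (INR (S j) * cf a k (S j)) <= INR (S j) * ec b u v k (S j)).
    { rewrite Rabs_mult, Rabs_pos_eq by apply pos_INR. apply Rmult_le_compat_l. apply pos_INR. apply IH. }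
    assert (A2 : Rabs (2 * a ^ 2 * shift (cf a k) j) <= v * shift (ec b u v k) j).
    { fold v. rewrite Rabs_mult, (Rabs_pos_eq v) by auto. apply Rmult_le_compat_l; auto.
      destruct j; simpl. rewrite Rabs_R0; lra. apply IH. }
    assert (A3 : Rabs (dlt ((-1) ^ k * b) j) <= dlt b j).
    { destruct j; simpl. rewrite Rabs_mult, pow_1_abs, Rabs_pos_eq; auto; lra. rewrite Rabs_R0; lra. }
    assert (A4 : Rabs (cf a k j) <= ec b u v k j) by apply IH.
    assert (Hrat := ec_ratio b u v Hb ltac:(lra) Hv k j).
    assert (Hk' : INR k <= INR R0) by (apply le_INR; lia).
    assert (He := ec_nonneg b u v Hb ltac:(lra) Hv k j).
    assert (Hd : dlt b j <= ec b u v k j) by (destruct j; simpl; [apply ec_0; auto | auto]).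
    assert (Hs : INR (S j) * ec b u v k (S j) <= (u - 2) * ec b u v k j).
    { assert (INR k * v * ec b u v k j <= (u^2 - 2*u) * ec b u v k j).
      { apply Rmult_le_compat_r; auto. assert (INR k * v <= INR R0 * v) by (apply Rmult_le_compat_r; auto). unfold v in *. lra. }
      assert (u * (INR (S j) * ec b u v k (S j)) <= u * ((u - 2) * ec b u v k j)) by nra.
      apply Rmult_le_reg_l with u; lra. }
    change (ec b u v (S k) j) with (u * ec b u v k j + v * shift (ec b u v k) j).
    eapply Rle_trans. apply Rabs_triang. unfold Rminus.
    eapply Rle_trans. apply Rplus_le_compat_r. apply Rabs_triang.
    eapply Rle_trans. apply Rplus_le_compat_r. apply Rplus_le_compat_r. apply Rabs_triang.
    rewrite !Rabs_Ropp. nra.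
Qed.

Lemma Qp_bound : forall a R0 u, 0 <= a -> 1 <= u -> u ^ 2 - 2 * u >= INR R0 * (2 * a ^ 2) ->
  forall p, Rabs (Qp a R0 p) <= bconst a * (u + 2 * a ^ 2 * Rabs p) ^ R0.
Proof.
  intros a R0 u Ha Hu HR p. unfold Qp.
  rewrite <- ec_sum. eapply Rle_trans. apply Rsum_abs.
  apply sum_Rle. intros j Hj. rewrite Rabs_mult, <- RPow_abs.
  apply Rmult_le_compat_r. apply pow_le, Rabs_pos.
  apply (cf_bound a R0 u Ha Hu HR R0 (Nat.le_refl _)).
Qed.

Lemma W0 : forall y, exp (- 4 * y ^ 2 + y) * (1 + y ^ 2) <= 2.
Proof.
  intro y. assert (H1 := exp_ineq1_le (y ^ 2)).
  assert (0 < exp (- 4 * y ^ 2 + y)) by apply exp_pos.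
  apply Rle_trans with (exp (- 4 * y ^ 2 + y) * exp (y ^ 2)).
  apply Rmult_le_compat_l; lra.
  rewrite <- exp_plus. left. apply Rle_lt_trans with (exp (1/8)). apply exple.
  assert (0 <= (y - 1/6)^2) by apply pow2_ge_0. nra. apply exp18.
Qed.

Lemma expneg_poly : forall p, 0 <= p -> exp (- p) * (1 + p ^ 2) <= 4.
Proof.
  intros p Hp. assert (H1 := exp_ineq1_le (p / 2)).
  assert (exp p = exp (p/2) * exp (p/2)) by (rewrite <- exp_plus; f_equal; field).
  assert (exp (-p) * exp p = 1) by (rewrite <- exp_plus; replace (-p+p) with 0 by ring; apply exp_0).
  assert (0 < exp (- p)) by apply exp_pos.
  assert (1 + p^2 <= 4 * exp p) by nra. nra.
Qed.

Lemma bern9 : forall n, 1 + 8 * INR n <= 9 ^ n.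
Proof. induction n. simpl; lra. rewrite S_INR. simpl. assert (0 <= INR n) by apply pos_INR. nra. Qed.

Lemma Fr_pointwise : forall eps r, 0 < eps <= exp (-2) ->
  1 / 2 * ln (/ eps) <= INR r <= ln (/ eps) ->
  forall p, Rabs (Fr eps r p) * (1 + p ^ 2) <= 6 * (66 * INR r) ^ r.
Proof.
  intros eps r He Hr p.
  destruct (eps_setup eps He) as (HL & HeL & Ha2 & Ha).
  set (L := ln (/ eps)) in *. set (a := a_eps eps) in *.
  assert (Hr1 : 1 <= INR r) by lra.
  set (rr := INR r) in *.
  assert (Hp2 : 0 <= p ^ 2) by apply pow2_ge_0.
  set (y := Rabs p).
  assert (Hy : 0 <= y) by apply Rabs_pos.
  assert (Hy2 : p ^ 2 = y ^ 2) by (unfold y; rewrite <- pow2_abs; reflexivity).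
  assert (Hpy : - p <= y) by (unfold y; generalize (Rabs_maj2 p); lra).
  assert (HEw : Ew a p <= exp (- 2 * rr * y ^ 2) * exp (- 4 * y ^ 2 + y)).
  { unfold Ew. rewrite <- exp_plus. apply exple. rewrite Rpow_mult_distr, Hy2.
    assert (a ^ 2 >= 2 * rr + 4) by lra. assert (0 <= y^2) by apply pow2_ge_0. nra. }
  assert (Hpsi : psi eps p * (1 + p ^ 2) <= 4).
  { destruct (Rle_or_lt 0 p).
    - destruct (part_i eps He p) as [_ H1]. rewrite Rabs_pos_eq in H1 by auto.
      assert (H2 := expneg_poly p H). nra.
    - unfold psi. assert (H1 := phi_neg eps p Ha ltac:(lra)). fold a in H1.
      assert (H2 : exp (- (a * p) ^ 2) * exp (- p) = Ew a p).
      { unfold Ew. rewrite <- exp_plus. f_equal; ring. }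
      assert (H3 : Ew a p <= exp (- 4 * y ^ 2 + y)).
      { eapply Rle_trans. apply HEw. rewrite <- (Rmult_1_l (exp (- 4 * y ^ 2 + y))) at 2.
        apply Rmult_le_compat_r. left; apply exp_pos. rewrite <- exp_0. apply exple.
        assert (0 <= y^2) by apply pow2_ge_0. nra. }
      assert (H4 := W0 y).
      assert (0 < exp (- p)) by apply exp_pos.
      assert (0 < exp (- 4 * y ^ 2 + y)) by apply exp_pos.
      assert (phi eps p * exp (- p) <= Ew a p / 2) by (rewrite <- H2; nra).
      assert (0 <= Ew a p) by (left; apply exp_pos).
      assert (phi eps p * exp (- p) * (1 + p^2) <= Ew a p / 2 * (1 + p^2)) by (apply Rmult_le_compat_r; lra).
      assert (Ew a p * (1 + p^2) <= exp (- 4 * y ^ 2 + y) * (1 + p^2)) by (apply Rmult_le_compat_r; lra).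
      replace (Ew a p / 2 * (1 + p^2)) with (Ew a p * (1 + p^2) / 2) in * by field. rewrite Hy2 in *. lra. }
  assert (Hcond : (6 * rr) ^ 2 - 2 * (6 * rr) >= INR r * (2 * a ^ 2)).
  { fold rr. rewrite Ha2. assert (rr * L <= 2 * rr * rr) by nra. assert (rr * rr >= rr) by nra.
    simpl. lra. }
  assert (HQ := Qp_bound a r (6 * rr) Ha ltac:(lra) Hcond p). fold y in HQ.
  assert (Hb : bconst a <= 3 ^ r).
  { unfold bconst. assert (1 <= sqrt PI).
    { rewrite <- sqrt_1. apply sqrt_le_1_alt. generalize PI_RGT_0 PI2_1. lra. }
    assert (a ^ 2 <= (3 ^ r) ^ 2).
    { rewrite <- pow_mult, Nat.mul_comm, pow_mult. replace (3^2) with 9 by ring. rewrite Ha2. generalize (bern9 r). fold rr. lra. }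
    assert (0 <= 3 ^ r) by (apply pow_le; lra).
    assert (a <= 3 ^ r) by nra.
    apply Rle_trans with a; auto. unfold Rdiv. rewrite <- (Rmult_1_r a) at 2.
    apply Rmult_le_compat_l; auto. rewrite <- Rinv_1. apply Rinv_le_contravar; lra. }
  assert (Hpoly : (6 * rr + 2 * a ^ 2 * y) ^ r <= rr ^ r * (6 + 16 * y) ^ r).
  { rewrite <- Rpow_mult_distr. apply pow_incr. split. nra. nra. }
  assert (Hg : (6 + 16 * y) * exp (- 2 * y ^ 2) <= 22).
  { assert (H1 := exp_ineq1_le (2 * y ^ 2)).
    assert (exp (- 2 * y ^ 2) * exp (2 * y ^ 2) = 1) by (rewrite <- exp_plus; replace (- 2 * y ^ 2 + 2 * y ^ 2) with 0 by ring; apply exp_0).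
    assert (0 < exp (- 2 * y ^ 2)) by apply exp_pos.
    assert (6 + 16 * y <= 22 * (1 + 2 * y ^ 2)) by nra. nra. }
  assert (Hexp : exp (- 2 * rr * y ^ 2) = exp (- 2 * y ^ 2) ^ r).
  { rewrite <- exp_pow_n. f_equal. unfold rr. ring. }
  assert (Hg2 : ((6 + 16 * y) * exp (- 2 * y ^ 2)) ^ r <= 22 ^ r).
  { apply pow_incr. split; auto. assert (0 < exp (- 2 * y ^ 2)) by apply exp_pos. nra. }
  rewrite Rpow_mult_distr in Hg2.
  assert (HW := W0 y).
  unfold Fr. fold a.
  assert (HF : Rabs ((-1) ^ r * psi eps p + Qp a r p * Ew a p) <= psi eps p + Rabs (Qp a r p) * Ew a p).
  { eapply Rle_trans. apply Rabs_triang. rewrite !Rabs_mult, pow_1_abs.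
    rewrite (Rabs_pos_eq (psi eps p)) by (left; apply part_i; auto).
    rewrite (Rabs_pos_eq (Ew a p)) by (left; apply exp_pos). lra. }
  assert (H0a : 0 <= Rabs (Qp a r p)) by apply Rabs_pos.
  assert (H0b : 0 <= Ew a p) by (left; apply exp_pos).
  assert (H0c : 0 <= bconst a) by (apply bconst_nonneg; auto).
  assert (H0d : 0 <= (6 * rr + 2 * a ^ 2 * y) ^ r) by (apply pow_le; nra).
  assert (HQE : Rabs (Qp a r p) * Ew a p * (1 + p ^ 2) <= 2 * (66 * rr) ^ r).
  { set (E1 := exp (- 2 * y ^ 2)) in *. set (E2 := exp (- 4 * y ^ 2 + y)) in *.
    assert (0 <= E1) by (left; apply exp_pos). assert (0 <= E2) by (left; apply exp_pos).
    rewrite Hexp in HEw.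
    apply Rle_trans with (3 ^ r * (rr ^ r * (6 + 16 * y) ^ r) * (E1 ^ r * E2) * (1 + p ^ 2)).
    { apply Rmult_le_compat_r. lra. apply Rmult_le_compat; auto.
      apply Rle_trans with (bconst a * (6 * rr + 2 * a ^ 2 * y) ^ r); auto.
      apply Rmult_le_compat; auto. }
    replace (66 * rr) with (3 * rr * 22) by ring. rewrite !Rpow_mult_distr.
    assert (0 <= 3 ^ r * rr ^ r) by (apply Rmult_le_pos; apply pow_le; lra).
    assert (0 <= (6 + 16 * y) ^ r * E1 ^ r) by (apply Rmult_le_pos; apply pow_le; nra).
    replace (3 ^ r * (rr ^ r * (6 + 16 * y) ^ r) * (E1 ^ r * E2) * (1 + p ^ 2))
      with ((3 ^ r * rr ^ r) * ((6 + 16 * y) ^ r * E1 ^ r) * (E2 * (1 + p ^ 2))) by ring.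
    replace (2 * (3 ^ r * rr ^ r * 22 ^ r)) with ((3 ^ r * rr ^ r) * 22 ^ r * 2) by ring.
    apply Rmult_le_compat; try nra. }
  assert (1 <= (66 * rr) ^ r) by (apply pow_R1_Rle; lra).
  assert (Rabs ((-1) ^ r * psi eps p + Qp a r p * Ew a p) * (1 + p ^ 2) <=
          (psi eps p + Rabs (Qp a r p) * Ew a p) * (1 + p^2)) by (apply Rmult_le_compat_r; lra).
  nra.
Qed.

Lemma ballR : forall (y e z : R), Rabs (z - y) < e -> ball y e z.
Proof. intros. unfold ball; simpl. unfold AbsRing_ball, abs, minus, plus, opp; simpl. auto. Qed.

Lemma mono_lim_p : forall (G : R -> R) B, (forall x y, x <= y -> G x <= G y) -> (forall x, G x <= B) ->
  exists l, filterlim G (Rbar_locally p_infty) (locally l) /\ l <= B /\ G 0 <= l.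
Proof.
  intros G B Hm Hb.
  destruct (completeness (fun z => exists x, z = G x)) as [l [Hl1 Hl2]].
  { exists B. intros z [x ->]. auto. }
  { exists (G 0). eauto. }
  exists l. split; [|split].
  - apply filterlim_locally. intros eps.
    assert (exists x0, l - eps < G x0).
    { apply NNPP. intro Hn. assert (is_upper_bound (fun z => exists x, z = G x) (l - eps)).
      { intros z [x ->]. apply Rnot_lt_le. intro. apply Hn. eauto. }
      specialize (Hl2 _ H). destruct eps; simpl in *; lra. }
    destruct H as [x0 Hx0]. exists x0. intros x Hx. apply ballR.
    assert (G x0 <= G x) by (apply Hm; lra). assert (G x <= l) by (apply Hl1; eauto).
    apply Rabs_lt_between'. lra.
  - apply Hl2. intros z [x ->]. auto.
  - apply Hl1. eauto.
Qed.

Lemma mono_lim_m : forall (G : R -> R) B, (forall x y, x <= y -> G x <= G y) -> (forall x, B <= G x) ->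
  exists l, filterlim G (Rbar_locally m_infty) (locally l) /\ B <= l /\ l <= G 0.
Proof.
  intros G B Hm Hb.
  destruct (completeness (fun z => exists x, z = - G x)) as [l [Hl1 Hl2]].
  { exists (- B). intros z [x ->]. specialize (Hb x). lra. }
  { exists (- G 0). eauto. }
  exists (- l). split; [|split].
  - apply filterlim_locally. intros eps.
    assert (exists x0, l - eps < - G x0).
    { apply NNPP. intro Hn. assert (is_upper_bound (fun z => exists x, z = - G x) (l - eps)).
      { intros z [x ->]. apply Rnot_lt_le. intro. apply Hn. eauto. }
      specialize (Hl2 _ H). destruct eps; simpl in *; lra. }
    destruct H as [x0 Hx0]. exists x0. intros x Hx. apply ballR.
    assert (G x <= G x0) by (apply Hm; lra). assert (- G x <= l) by (apply Hl1; eauto).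
    apply Rabs_lt_between'. lra.
  - assert (l <= - B). { apply Hl2. intros z [x ->]. specialize (Hb x). lra. } lra.
  - assert (- G 0 <= l) by (apply Hl1; eauto). lra.
Qed.

Lemma improper_bound : forall (h : R -> R) K, (forall x, continuous h x) ->
  (forall x, 0 <= h x <= K / (1 + x ^ 2)) ->
  exists I, is_RInt_gen h (Rbar_locally m_infty) (Rbar_locally p_infty) I /\ 0 <= I <= K * PI.
Proof.
  intros h K Hc Hb.
  assert (Hex : forall a b, ex_RInt h a b) by (intros; apply exRInt_cont; intros; apply Hc).
  set (G := fun x => RInt h 0 x).
  assert (HG : forall x, is_derive G x (h x)).
  { intro x. apply is_derive_RInt with 0. apply filter_forall. intros; apply RInt_correct, Hex. apply Hc. }
  assert (HK : 0 <= K) by (generalize (Hb 0); replace (1 + 0^2) with 1 by ring; lra).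
  assert (Hmono : forall x y, x <= y -> G x <= G y).
  { intros x y Hxy. unfold G. rewrite <- (RInt_Chasles h 0 x y) by apply Hex.
    assert (0 <= RInt h x y) by (apply RInt_ge_0; auto; intros; apply Hb).
    unfold plus; simpl. lra. }
  assert (Hat : forall x, 0 <= x -> G x <= K * atan x).
  { intros x Hx. unfold G. rewrite <- RInt_atan.
    replace (K * RInt (fun t => / (1 + t ^ 2)) 0 x) with (RInt (fun t => scal K (/ (1 + t ^ 2))) 0 x).
    2:{ rewrite (RInt_scal (V:=R_CompleteNormedModule)). reflexivity.
        apply exRInt_cont; intros; apply exd_cont; auto_derive. assert (0 <= z^2) by apply pow2_ge_0. lra. }
    apply RInt_le; auto. apply exRInt_cont; intros; apply exd_cont.
    apply (ex_derive_ext (fun t => K * / (1 + t ^ 2))). intros; reflexivity.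
    auto_derive. assert (0 <= z^2) by apply pow2_ge_0. lra.
    intros t Ht. change (h t <= K * / (1 + t ^ 2)). apply Hb. }
  assert (Hat2 : forall x, x <= 0 -> K * atan x <= G x).
  { intros x Hx. unfold G. rewrite <- RInt_atan.
    rewrite <- (opp_RInt_swap h) by apply Hex. rewrite <- (opp_RInt_swap (fun t => / (1 + t ^ 2))).
    2:{ apply exRInt_cont; intros; apply exd_cont; auto_derive. assert (0 <= z^2) by apply pow2_ge_0. lra. }
    assert (E1 : RInt (fun t => scal K (/ (1 + t ^ 2))) x 0 = K * RInt (fun t => / (1 + t ^ 2)) x 0).
    { rewrite (RInt_scal (V:=R_CompleteNormedModule)). reflexivity.
        apply exRInt_cont; intros; apply exd_cont; auto_derive. assert (0 <= z^2) by apply pow2_ge_0. lra. }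
    assert (RInt h x 0 <= RInt (fun t => scal K (/ (1 + t ^ 2))) x 0).
    { apply RInt_le; auto. apply exRInt_cont; intros; apply exd_cont.
      apply (ex_derive_ext (fun t => K * / (1 + t ^ 2))). intros; reflexivity.
      auto_derive. assert (0 <= z^2) by apply pow2_ge_0. lra.
      intros t Ht. change (h t <= K * / (1 + t ^ 2)). apply Hb. }
    change (K * (- RInt (fun t => / (1 + t ^ 2)) x 0) <= - RInt h x 0). lra. }
  assert (HG0 : G 0 = 0) by (unfold G; apply (RInt_point (V:=R_CompleteNormedModule))).
  destruct (mono_lim_p G (K * (PI / 2)) Hmono) as [lp [Hlp [Hlp1 Hlp2]]].
  { intro x. destruct (Rle_or_lt 0 x).
    - eapply Rle_trans. apply Hat; auto. apply Rmult_le_compat_l; auto. left; apply atan_bound.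
    - assert (G x <= G 0) by (apply Hmono; lra). assert (0 <= K * (PI/2)) by (generalize PI_RGT_0; nra). lra. }
  destruct (mono_lim_m G (- (K * (PI / 2))) Hmono) as [lm [Hlm [Hlm1 Hlm2]]].
  { intro x. destruct (Rle_or_lt x 0).
    - eapply Rle_trans. 2: apply Hat2; auto. generalize (atan_bound x). intros. nra.
    - assert (G 0 <= G x) by (apply Hmono; lra). assert (0 <= K * (PI/2)) by (generalize PI_RGT_0; nra). lra. }
  exists (lp - lm). split.
  - apply (is_RInt_gen_ext (Derive G)).
    + exists (fun _ => True) (fun _ => True). exists 0; auto. exists 0; auto.
      intros. apply is_derive_unique. apply HG.
    + apply (is_RInt_gen_Derive G lm lp).
      * exists (fun _ => True) (fun _ => True). exists 0; auto. exists 0; auto.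
        intros. exists (h x0). apply HG.
      * exists (fun _ => True) (fun _ => True). exists 0; auto. exists 0; auto.
        intros. assert (Derive G = h).
        { apply functional_extensionality. intros. apply is_derive_unique. apply HG. }
        rewrite H2. apply Hc.
      * exact Hlm.
      * exact Hlp.
  - split; lra.
Qed.

Lemma ln_0 : ln 0 = 0.
Proof. unfold ln. destruct (Rlt_dec 0 0) as [H|H]; [exfalso; apply (Rlt_irrefl 0 H) | reflexivity]. Qed.

Lemma part_iii : exists C : R, 0 < C /\
     forall eps : R, 0 < eps <= exp (-2) ->
     forall r : nat, 1 / 2 * ln (/ eps) <= INR r <= ln (/ eps) ->
     exists n : R, L2_norm_is (Derive_n (psi eps) r) n
                   /\ Rpower n (/ INR r) <= C * INR r.
Proof.
  exists 792. split. lra.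
  intros eps He r Hr.
  destruct (eps_setup eps He) as (HL & HeL & Ha2 & Ha).
  assert (Hr1 : 1 <= INR r) by lra.
  set (M := 6 * (66 * INR r) ^ r).
  assert (HM1 : 1 <= (66 * INR r) ^ r) by (apply pow_R1_Rle; lra).
  rewrite Derive_n_psi.
  set (f := Fr eps r).
  assert (Hpt := Fr_pointwise eps r He Hr). fold f in Hpt.
  destruct (improper_bound (fun p => f p ^ 2) (M ^ 2)) as [I0 [HI1 [HI2 HI3]]].
  - intro x. apply exd_cont. exists (INR 2 * Fr eps (S r) x * f x ^ 1).
    apply (is_derive_pow f 2 x). apply Fr_deriv.
  - intro x. split. apply pow2_ge_0.
    assert (H1 := Hpt x). assert (0 <= x ^ 2) by apply pow2_ge_0.
    assert (0 <= Rabs (f x)) by apply Rabs_pos.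
    assert (H3 : (Rabs (f x) * (1 + x ^ 2)) ^ 2 <= M ^ 2) by (apply pow_incr; split; [nra | exact H1]).
    rewrite Rpow_mult_distr in H3.
    assert (f x ^ 2 * (1 + x^2) <= M ^ 2).
    { assert (f x ^ 2 * (1 + x^2) <= Rabs (f x) ^ 2 * (1 + x ^ 2) ^ 2).
      { rewrite pow2_abs. assert (0 <= f x ^ 2) by apply pow2_ge_0. nra. }
      lra. }
    apply Rmult_le_reg_r with (1 + x ^ 2). lra.
    unfold Rdiv. rewrite Rmult_assoc, Rinv_l, Rmult_1_r by lra. lra.
  - exists (sqrt I0). split.
    + exists I0. split. exact HI1. reflexivity.
    + assert (Hn0 : 0 <= sqrt I0) by apply sqrt_pos.
      assert (Hn2 : sqrt I0 * sqrt I0 = I0) by (apply sqrt_sqrt; auto).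
      assert (HM0 : 0 <= M) by (unfold M; lra).
      assert (Hn : sqrt I0 <= 2 * M).
      { generalize PI_4. intro. assert (I0 <= 4 * M ^ 2) by (assert (0 <= M^2) by apply pow2_ge_0; nra). nra. }
      assert (H2M : 2 * M <= (792 * INR r) ^ r).
      { unfold M. replace (792 * INR r) with (12 * (66 * INR r)) by ring. rewrite (Rpow_mult_distr 12).
        assert (12 <= 12 ^ r).
        { destruct r. simpl in Hr1; lra. simpl. assert (1 <= 12 ^ r) by (apply pow_R1_Rle; lra). lra. }
        assert (0 <= (12 ^ r - 12) * (66 * INR r) ^ r) by (apply Rmult_le_pos; lra).
        lra. }
      destruct Hn0 as [Hn0 | Hn0].
      * apply Rle_trans with (Rpower ((792 * INR r) ^ r) (/ INR r)).
        apply Rle_Rpower_l. left; apply Rinv_0_lt_compat; lra. lra.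
        rewrite <- Rpower_pow by lra. rewrite Rpower_mult. rewrite Rinv_r by lra. rewrite Rpower_1 by lra. lra.
      * rewrite <- Hn0. unfold Rpower. rewrite ln_0, Rmult_0_r, exp_0. lra.
Qed.

Theorem theorem4p1 :
  (forall eps : R, 0 < eps <= exp (-2) ->
     (forall p : R, 0 < psi eps p <= exp (- Rabs p))
     /\ (forall p : R, 1 / 2 <= p -> Rabs (psi eps p - exp (- p)) <= eps))
  /\
  (exists C : R, 0 < C /\
     forall eps : R, 0 < eps <= exp (-2) ->
     forall r : nat, 1 / 2 * ln (/ eps) <= INR r <= ln (/ eps) ->
     exists n : R, L2_norm_is (Derive_n (psi eps) r) n
                   /\ Rpower n (/ INR r) <= C * INR r).
Proof.
  split.
  - intros eps He. split. apply part_i; auto. apply part_ii; auto.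
  - apply part_iii.
Qed.
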